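(* Let $Y$ be a finite connected simple undirected graph and $e=\{v,w\}$ a cycle-edge of $Y$. If $O^1,O^2\in\mathsf{Acyc}(Y)$ are $\kappa$-equivalent and $v\leq_{O^1}w$ and $v\leq_{O^2}w$, then $\mathcal{I}(O^1)=\mathcal{I}(O^2)$; that is, the same vertices lie on directed paths from $v$ to $w$ in $O^1$ and in $O^2$, and the induced subdigraphs of $O^1$ and $O^2$ on this vertex set coincide. Hence $\mathcal{I}^*([O]):=\mathcal{I}(O^1)$ for any $O^1\in[O]$ with $\mathcal{I}(O^1)\neq\varnothing$ is a well-defined map on $\mathsf{Acyc}(Y)/\!\sim_\kappa$.
   Context: A cycle-edge is an edge whose removal does not increase the number of connected components. $\mathsf{Acyc}(Y)$ is the set of acyclic orientations; an acyclic orientation $O$ induces a partial order $\leq_O$ on vertices with $i\leq_O j$ iff there is a directed path from $i$ to $j$. $\mathcal{I}(O)$ is the interval $[v,w]=\{a: v\leq_O a\leq_O w\}$ (with the induced orientation) if $v\leq_O w$, and the empty graph otherwise. A click at a source $x$ reverses all edges incident to $x$; two acyclic orientations are $\kappa$-equivalent if one can be transformed into the other by a finite sequence of clicks; $[O]$ is the $\kappa$-class of $O$. *)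

(* Defs.v *)
From mathcomp Require Import all_boot.
Set Implicit Arguments. Unset Strict Implicit. Unset Printing Implicit Defensive.

Section Defs.
Variable T : finType.

Definition simple_graph (e : rel T) : Prop := symmetric e /\ irreflexive e.
Definition connected_graph (e : rel T) : Prop := forall x y, connect e x y.

Definition remove_edge (e : rel T) (v w : T) : rel T :=
  [rel a b | e a b && ~~ (((a == v) && (b == w)) || ((a == w) && (b == v)))].

Definition cycle_edge (e : rel T) (v w : T) : Prop :=
  e v w /\ n_comp (remove_edge e v w) predT <= n_comp e predT.

Definition orientation (e : rel T) (O : rel T) : Prop :=
  forall a b, (O a b -> e a b) /\ (e a b -> O a b (+) O b a).

Definition acyclic_orientation (e : rel T) (O : rel T) : Prop :=
  orientation e O /\ forall a b, O a b -> ~~ connect O b a.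

Definition leO (O : rel T) (i j : T) : bool := connect O i j.

Definition source (O : rel T) (x : T) : bool := [forall y, ~~ O y x].

Definition click (O : rel T) (x : T) : rel T :=
  [rel a b | if (a == x) || (b == x) then O b a else O a b].

Definition click_step (O O' : rel T) : Prop :=
  exists2 x, source O x & O' =2 click O x.

Inductive click_reach : rel T -> rel T -> Prop :=
  | cr_refl O O' : O =2 O' -> click_reach O O'
  | cr_step O O' O'' : click_step O O' -> click_reach O' O'' -> click_reach O O''.

Definition kappa_equiv (O1 O2 : rel T) : Prop :=
  click_reach O1 O2 \/ click_reach O2 O1.

(* interval I(O) = [v,w]_O with induced orientation, empty if not v <=_O w *)
Definition interval_vertices (O : rel T) (v w : T) : {set T} :=
  if leO O v w then [set a | leO O v a && leO O a w] else set0.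

Definition interval_rel (O : rel T) (v w : T) : rel T :=
  [rel a b | (a \in interval_vertices O v w) && (b \in interval_vertices O v w)
             && O a b].

End Defs.

(* Main.v *)
Require Import Defs.
From mathcomp Require Import all_boot.
Set Implicit Arguments. Unset Strict Implicit. Unset Printing Implicit Defensive.

Section Aux.
Variable T : finType.

Fixpoint fwd (O : rel T) (x : T) (s : seq T) : nat :=
  if s is y :: s' then O x y + fwd O y s' else 0.
Fixpoint leave (z x : T) (s : seq T) : nat :=
  if s is y :: s' then (x == z) + leave z y s' else 0.

Lemma eq_fwd (O O' : rel T) : O =2 O' -> forall x s, fwd O x s = fwd O' x s.
Proof. by move=> H x s; elim: s x => //= y s IH x; rewrite H IH. Qed.

Lemma leave_closed z x s : leave z x s + (last x s == z) = (x == z) + count_mem z s.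
Proof.
elim: s x => [|y s IH] x /=; first by rewrite addn0.
by rewrite -addnA IH.
Qed.

Lemma click_fwd (e O O' : rel T) z :
  symmetric e -> irreflexive e -> orientation e O -> source O z ->
  O' =2 click O z -> forall x s, path e x s ->
  fwd O' x s + leave z x s = fwd O x s + count_mem z s.
Proof.
move=> sym irr orn /forallP src HO'.
move=> x s; elim: s x => [|y s IH] x //= /andP [exy ps].
have step : O' x y + (x == z) = O x y + (y == z).
  rewrite HO' /click /=.
  case: (eqVneq x z) => [Exz|Nxz].
    subst x.
    have Nyz : (y == z) = false.
      by apply/negbTE; apply/eqP => Eyz; subst y; rewrite irr in exy.
    rewrite Nyz /=.
    have := (orn z y).2 exy. have := src y. case: (O y z) => //= _.
    by case: (O z y).
  rewrite /=. case: (eqVneq y z) => [Eyz|Nyz] /=.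
    subst y.
    have := (orn x z).2 exy. have := src x. case: (O x z) => //= _.
    by case: (O z x).
  by rewrite !addn0.
have := IH _ ps. rewrite /=.
move: step; set a := O' x y; set b := O x y; set c := (x == z); set d := (y == z).
move=> step IH'.
have -> : a + fwd O' y s + (c + leave z y s) = (a + c) + (fwd O' y s + leave z y s).
  by rewrite addnACA.
by rewrite step IH' addnACA.
Qed.

Lemma click_orient (e O O' : rel T) z :
  symmetric e -> orientation e O -> O' =2 click O z -> orientation e O'.
Proof.
move=> sym orn HO' a b; rewrite !HO' /click /=; split.
  by case: ifP => _ H; [rewrite sym; apply: (orn _ _).1 | apply: (orn _ _).1].
move=> eab; rewrite orbC.
case: ifP => _.
  by rewrite addbC; apply: (orn _ _).2.
exact: (orn _ _).2.
Qed.

Lemma reach_inv (e : rel T) (O O' : rel T) :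
  symmetric e -> irreflexive e -> click_reach O O' -> orientation e O ->
  orientation e O' /\ forall x s, path e x s -> last x s = x -> fwd O' x s = fwd O x s.
Proof.
move=> sym irr; elim=> {O O'}.
  move=> O O' H orn; split.
    by move=> a b; rewrite -!H; apply: orn.
  by move=> x s _ _; rewrite (eq_fwd H).
move=> O O' O'' [z src H] _ IH orn.
have orn' := click_orient sym orn H.
have [orn'' inv] := IH orn'.
split => // x s ps lx.
rewrite inv //.
have := click_fwd sym irr orn src H ps.
have L : leave z x s = count_mem z s.
  by apply/eqP; have := leave_closed z x s; rewrite lx addnC => /eqP; rewrite eqn_add2l.
by rewrite L => /eqP; rewrite eqn_add2r => /eqP.
Qed.

Lemma fwd_path (O : rel T) x s : fwd O x s <= size s /\ (fwd O x s == size s) = path O x s.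
Proof.
elim: s x => [|y s IH] x //=.
have [H1 H2] := IH y.
case: (O x y) => /=.
  by rewrite add1n ltnS H1 eqSS H2.
rewrite add0n; split; first by rewrite ltnW // ltnS.
by apply/negbTE; rewrite neq_ltn ltnS H1.
Qed.

Lemma transfer (e O O' : rel T) v w :
  symmetric e -> orientation e O -> orientation e O' -> O v w -> O' v w ->
  (forall x s, path e x s -> last x s = x -> fwd O' x s = fwd O x s) ->
  forall s, path O v s -> last v s = w -> path O' v s.
Proof.
move=> sym orn orn' Ovw O'vw inv s ps ls.
have evw : e v w := (orn v w).1 Ovw.
have pe : path e w (v :: s).
  rewrite /= sym evw /=.
  by apply: (sub_path _ ps) => a b /(orn a b).1.
have := inv _ _ pe ls => /=.
have Nw : O w v = false.
  by have := (orn v w).2 evw; rewrite Ovw; case: (O w v).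
have Nw' : O' w v = false.
  by have := (orn' v w).2 evw; rewrite O'vw; case: (O' w v).
rewrite Nw Nw' !add0n => E.
by rewrite -(fwd_path O' v s).2 E (fwd_path O v s).2.
Qed.

Lemma leO_edge (e O : rel T) v w :
  acyclic_orientation e O -> e v w -> leO O v w -> O v w.
Proof.
move=> [orn acy] evw le.
have := (orn v w).2 evw. case: (O v w) => //= Owv.
by have := acy _ _ Owv; rewrite /leO in le; rewrite le.
Qed.

Lemma transfer_int (O O' : rel T) v w :
  leO O v w -> leO O' v w ->
  (forall s, path O v s -> last v s = w -> path O' v s) ->
  (forall a, a \in interval_vertices O v w -> a \in interval_vertices O' v w) /\
  (forall a b, interval_rel O v w a b -> O' a b).
Proof.
move=> le le' H.
have mem : forall (Q : rel T), leO Q v w -> forall a,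
    (a \in interval_vertices Q v w) = (leO Q v a && leO Q a w).
  by move=> Q lQ a; rewrite /interval_vertices lQ inE.
split.
  move=> a; rewrite !mem // => /andP [/connectP [p pp ->] /connectP [q pq lq]].
  have := H (p ++ q); rewrite cat_path pp pq last_cat -lq => /(_ erefl erefl).
  rewrite cat_path => /andP [p1 p2].
  by apply/andP; split; apply/connectP; [exists p | exists q].
move=> a b /= /andP [/andP [ha hb] Oab].
move: ha hb; rewrite !mem // => /andP [/connectP [p pp Ea] _] /andP [_ /connectP [q pq lq]].
rewrite Ea in Oab *.
have := H (p ++ b :: q); rewrite cat_path pp /= Oab pq /= last_cat /= -lq.
by move=> /(_ erefl erefl); rewrite cat_path => /andP [_ /= /andP [] ].
Qed.

End Aux.

Theorem proposition5 (T : finType) (e : rel T) (v w : T) (O1 O2 : rel T) :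
  simple_graph e -> connected_graph e -> cycle_edge e v w ->
  acyclic_orientation e O1 -> acyclic_orientation e O2 ->
  kappa_equiv O1 O2 ->
  leO O1 v w -> leO O2 v w ->
  interval_vertices O1 v w = interval_vertices O2 v w /\
  interval_rel O1 v w =2 interval_rel O2 v w.
Proof.
move=> [sym irr] _ [evw _] ac1 ac2 keq le1 le2.
have o1 := leO_edge ac1 evw le1.
have o2 := leO_edge ac2 evw le2.
have inv : forall x s, path e x s -> last x s = x -> fwd O2 x s = fwd O1 x s.
  case: keq => R.
    exact: (reach_inv sym irr R ac1.1).2.
  by move=> x s ps ls; rewrite (reach_inv sym irr R ac2.1).2.
have inv' : forall x s, path e x s -> last x s = x -> fwd O1 x s = fwd O2 x s.
  by move=> x s ps ls; rewrite inv.
have [A1 B1] := transfer_int le1 le2 (transfer sym ac1.1 ac2.1 o1 o2 inv).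
have [A2 B2] := transfer_int le2 le1 (transfer sym ac2.1 ac1.1 o2 o1 inv').
have EV : interval_vertices O1 v w = interval_vertices O2 v w.
  by apply/setP => a; apply/idP/idP; [apply: A1 | apply: A2].
split => // a b.
apply/idP/idP => H.
  have O2ab := B1 _ _ H; move: H; rewrite /interval_rel /= EV => /andP [-> _].
  by rewrite O2ab.
have O1ab := B2 _ _ H; move: H; rewrite /interval_rel /= -EV => /andP [-> _].
by rewrite O1ab.
Qed.
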